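(* Let $X,Y$ be compact metric spaces and let $\mathcal G\subset\mathrm{Homeo}(X)$, $\mathcal H\subset\mathrm{Homeo}(Y)$ be finitely generated pseudogroups strongly isomorphic via a homeomorphism $\varphi:X\to Y$; let $\mathcal G_1$ be a finite generating set of $\mathcal G$ and $\mathcal H_1=\{\varphi\circ g\circ\varphi^{-1}:g\in\mathcal G_1\}$. Then $h_{top}(\mathcal G,\mathcal G_1)=h_{top}(\mathcal H,\mathcal H_1)$.
   Context: $\mathrm{Homeo}(X)$: homeomorphisms $g:D_g\to R_g$ between open subsets of $X$, composed on natural domains $D_{h\circ g}=g^{-1}(D_h)$. A pseudogroup is a subset of $\mathrm{Homeo}(X)$ containing $\mathrm{id}_X$, closed under composition, inversion, restriction to open subsets, and gluing along open covers of the domain; $\Gamma$ generates $\mathcal G$ if $\bigcup_{g\in\Gamma}(D_g\cup R_g)=X$ and $\mathcal G$ is exactly the set of $g\in\mathrm{Homeo}(X)$ locally equal near each point of $D_g$ to a finite composition of elements of $\Gamma$ and their inverses. $\mathcal G,\mathcal H$ are strongly isomorphic via $\varphi$ if for every $f\in\mathrm{Homeo}(X)$: $\varphi\circ f\circ\varphi^{-1}\in\mathcal H$ iff $f\in\mathcal G$. For a pseudogroup with finite generating set $\Gamma$ on a compact metric space $Z$: $\Gamma_n=\{g_1\circ\cdots\circ g_n:g_i\in\Gamma\}$, $\Gamma_n^x=\{g\in\Gamma_n:x\in D_g\}$; $x,y$ are $(n,\varepsilon)$-separated if some $g\in\Gamma_n^x\cap\Gamma_n^y$ has $d(g(x),g(y))\ge\varepsilon$;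 $s(n,\varepsilon)$ is the maximal cardinality of a subset of $Z$ whose distinct points are pairwise $(n,\varepsilon)$-separated; and the topological entropy is $h_{top}=\lim_{\varepsilon\to0^+}\limsup_{n\to\infty}\frac1n\log s(n,\varepsilon)$. *)

(* Defs.v *)
From Stdlib Require List.
From HB Require Import structures.
From mathcomp Require Import all_boot all_order all_algebra.
From mathcomp Require Import all_classical all_reals all_analysis.
Set Implicit Arguments. Unset Strict Implicit. Unset Printing Implicit Defensive.
Import Order.TTheory GRing.Theory Num.Theory.
Local Open Scope classical_set_scope.
Local Open Scope ring_scope.

Section Metric.
Variables (R : realType) (X : Type) (d : X -> X -> R).

Definition is_metric :=
  [/\ forall x y, 0 <= d x y, forall x y, d x y = 0 <-> x = y,
      forall x y, d x y = d y x & forall x y z, d x z <= d x y + d y z].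

Definition mopen (U : set X) :=
  forall x, U x -> exists2 r : R, 0 < r & forall y, d x y < r -> U y.

Definition mcompact :=
  forall (I : Type) (U : I -> set X), (forall i, mopen (U i)) ->
    (forall x, exists i, U i x) ->
    exists s : seq I, forall x, exists2 i, List.In i s & U i x.

Definition compact_metric_space := is_metric /\ mcompact.
End Metric.

Definition mcont_on (R : realType) (X Y : Type) (dX : X -> X -> R)
  (dY : Y -> Y -> R) (D : set X) (f : X -> Y) :=
  forall x, D x -> forall e : R, 0 < e -> exists2 r : R, 0 < r &
    forall y, D y -> dX x y < r -> dY (f x) (f y) < e.

(* A (candidate) element of Homeo(X): domain, range, map and its inverse.
   Values of fn outside dom (of inv outside ran) are irrelevant. *)
Record phom (X : Type) := PHom {
  dom : set X; ran : set X; fn : X -> X; inv : X -> X }.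

Section Pseudo.
Variables (R : realType) (X : Type) (d : X -> X -> R).

Definition is_homeo (g : phom X) :=
  [/\ mopen d (dom g) /\ mopen d (ran g),
      (forall x, dom g x -> ran g (fn g x) /\ inv g (fn g x) = x),
      (forall y, ran g y -> dom g (inv g y) /\ fn g (inv g y) = y),
      mcont_on d d (dom g) (fn g) & mcont_on d d (ran g) (inv g)].

Definition peq (g h : phom X) := dom g = dom h /\ {in dom g, fn g =1 fn h}.

Definition pid : phom X := PHom setT setT id id.

Definition pcomp (h g : phom X) : phom X :=
  PHom (dom g `&` (fn g) @^-1` (dom h)) (ran h `&` (inv h) @^-1` (ran g))
       (fn h \o fn g) (inv g \o inv h).

Definition pinv (g : phom X) : phom X := PHom (ran g) (dom g) (inv g) (fn g).

Definition prestr (g : phom X) (U : set X) : phom X :=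
  PHom U (fn g @` U) (fn g) (inv g).

(* G is a pseudogroup on X (a set of elements of Homeo(X); membership
   depends only on the partial map, hence closure under peq) *)
Definition is_pseudogroup (G : set (phom X)) :=
  [/\ (forall g, G g -> is_homeo g),
      (forall g h, G g -> is_homeo h -> peq g h -> G h) /\ G pid,
      (forall g h, G g -> G h -> G (pcomp h g)),
      (forall g, G g -> G (pinv g)) /\
      (forall g U, G g -> mopen d U -> U `<=` dom g -> G (prestr g U)) &
      (forall g, is_homeo g ->
         (forall x, dom g x -> exists2 U, mopen d U /\ U `<=` dom g /\ U x &
                                  G (prestr g U)) -> G g)].

Definition pcomp_word (w : seq (phom X)) : phom X := foldr pcomp pid w.

Definition generates (Gam : seq (phom X)) (G : set (phom X)) :=
  (forall x, exists2 g, List.In g Gam & dom g x \/ ran g x) /\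
  forall g, G g <->
    (is_homeo g /\
     forall x, dom g x -> exists U, exists w : seq (phom X),
       [/\ mopen d U /\ U x, U `<=` dom g,
           (forall h, List.In h w -> List.In h Gam \/
                                     exists2 k, List.In k Gam & h = pinv k),
           U `<=` dom (pcomp_word w) &
           {in U, fn g =1 fn (pcomp_word w)}]).

Definition finitely_generated (G : set (phom X)) :=
  exists Gam : seq (phom X), generates Gam G.

Definition separated (Gam : seq (phom X)) (n : nat) (eps : R) (x y : X) :=
  exists w : seq (phom X), [/\ size w = n, (forall h, List.In h w -> List.In h Gam),
    dom (pcomp_word w) x, dom (pcomp_word w) y &
    eps <= d (fn (pcomp_word w) x) (fn (pcomp_word w) y)].

Local Open Scope ereal_scope.

Definition sep_card (Gam : seq (phom X)) (n : nat) (eps : R) : \bar R :=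
  ereal_sup [set (k%:R)%:E | k in [set k : nat | exists p : 'I_k -> X,
     injective p /\ forall i j, i != j -> separated Gam n eps (p i) (p j)]].

Definition htop (Gam : seq (phom X)) : \bar R :=
  lim ((fun eps : R =>
          limn_esup (fun n : nat => ((n%:R)^-1)%:E * lne (sep_card Gam n eps)))
       @ (0 : R)^'+).
End Pseudo.

Definition pconj (X Y : Type) (phi : X -> Y) (psi : Y -> X) (g : phom X) : phom Y :=
  PHom (psi @^-1` dom g) (psi @^-1` ran g) (phi \o fn g \o psi) (phi \o inv g \o psi).

Definition is_homeomorphism (R : realType) (X Y : Type) (dX : X -> X -> R)
  (dY : Y -> Y -> R) (phi : X -> Y) (psi : Y -> X) :=
  [/\ cancel phi psi, cancel psi phi, mcont_on dX dY setT phi & mcont_on dY dX setT psi].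

Definition strongly_isomorphic (R : realType) (X Y : Type) (dX : X -> X -> R)
  (dY : Y -> Y -> R) (phi : X -> Y) (psi : Y -> X)
  (G : set (phom X)) (H : set (phom Y)) :=
  forall f : phom X, is_homeo dX f -> (H (pconj phi psi f) <-> G f).

(* Main.v *)
Require Import Defs.
From mathcomp Require Import all_boot all_order all_algebra.
From mathcomp Require Import all_classical all_reals all_analysis.
Set Implicit Arguments. Unset Strict Implicit. Unset Printing Implicit Defensive.
Import Order.TTheory GRing.Theory Num.Theory.
Local Open Scope classical_set_scope.
Local Open Scope ring_scope.

Section Gen.
Variable R : realType.
Local Open Scope ereal_scope.

Lemma esups_le (u v : (\bar R)^nat) : (forall n, u n <= v n) ->
  forall n, esups u n <= esups v n.
Proof.
move=> uv n; rewrite /esups /=; apply: ge_ereal_sup => _ [k kn <-].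
apply: le_trans (uv k) _; apply: ereal_sup_ubound; by exists k.
Qed.

Lemma limn_esup_le (u v : (\bar R)^nat) : (forall n, u n <= v n) ->
  limn_esup u <= limn_esup v.
Proof.
move=> uv; rewrite !limn_esup_lim; apply: lee_lim.
- exact: is_cvg_esups.
- exact: is_cvg_esups.
- by near=> n; apply: esups_le.
Unshelve. all: by end_near. Qed.

Variables (X : Type) (d : X -> X -> R).

Lemma sep_card_ge0 Gam n eps : 0 <= sep_card d Gam n eps.
Proof.
apply: le_ereal_sup_tmp; exists (0%:R)%:E => //; exists 0%N => //.
exists (fun i : 'I_0 => match i with Ordinal _ H => False_rect _ (notF H) end).
split; first by move=> [].
by move=> [].
Qed.

Lemma sep_card_anti Gam n (e1 e2 : R) : (e1 <= e2)%R ->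
  sep_card d Gam n e2 <= sep_card d Gam n e1.
Proof.
move=> e12; apply: ereal_sup_le => _ [k [p [pi ps]] <-]; exists k => //.
exists p; split => // i j ij; have [w [? ? ? ? ?]] := ps i j ij.
exists w; split => //; exact: le_trans e12 _.
Qed.

Definition Fh Gam (eps : R) :=
  limn_esup (fun n : nat => ((n%:R)^-1)%:E * lne (sep_card d Gam n eps)).

Lemma Fh_anti Gam (e1 e2 : R) : (e1 <= e2)%R -> Fh Gam e2 <= Fh Gam e1.
Proof.
move=> e12; apply: limn_esup_le => n; apply: lee_wpmul2l.
  by rewrite lee_fin invr_ge0.
rewrite lee_lne ?sep_card_anti // in_itv /= ?sep_card_ge0 ?leey //.
Qed.

Lemma htopE Gam : htop d Gam =
  ereal_sup (Fh Gam @` [set` Interval (BRight (0%R : R)) (BInfty R false)]).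
Proof.
apply: (cvg_lim (@ereal_hausdorff R)).
apply: nonincreasing_at_right_cvge => //.
move=> a b _ _ ab; exact: Fh_anti.
Qed.
End Gen.

Lemma htop_le (R : realType) (X Y : Type) (dX : X -> X -> R) (dY : Y -> Y -> R)
  GX GY :
  (forall eps : R, 0 < eps -> exists2 del : R, 0 < del &
      forall n, (sep_card dX GX n eps <= sep_card dY GY n del)%E) ->
  (htop dX GX <= htop dY GY)%E.
Proof.
move=> H; rewrite !htopE; apply: ge_ereal_sup => _ [e e0 <-].
have e0' : 0 < e by move: e0 => /=; rewrite in_itv /= andbT.
have [del del0 Hd] := H e e0'.
apply: le_trans (_ : Fh dY GY del <= _)%E.
  apply: limn_esup_le => n; apply: lee_wpmul2l.
    by rewrite lee_fin invr_ge0.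
  rewrite lee_lne ?Hd // in_itv /= ?sep_card_ge0 ?leey //.
apply: ereal_sup_ubound; exists del => //=; by rewrite in_itv /= del0.
Qed.

Lemma unif_cont (R : realType) (X Y : Type) (dX : X -> X -> R) (dY : Y -> Y -> R)
  (f : X -> Y) : compact_metric_space dX -> is_metric dY ->
  mcont_on dX dY setT f -> forall e : R, 0 < e ->
  exists2 del : R, 0 < del & forall a b, dX a b < del -> dY (f a) (f b) < e.
Proof.
move=> [[dX0 dXeq dXs dXt] cX] [dY0 dYeq dYs dYt] fc e e0.
have e20 : 0 < e / 2 by rewrite divr_gt0.
have /choice [r Hr] : forall x, exists r : R,
    0 < r /\ forall y, dX x y < r -> dY (f x) (f y) < e / 2.
  move=> x; have [r r0 Hr] := fc x I (e / 2) e20.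
  by exists r; split => // y; apply: Hr.
pose U := fun x => fun y => dX x y < r x / 2.
have Uo : forall x, mopen dX (U x).
  move=> x y Uy; exists (r x / 2 - dX x y); first by rewrite subr_gt0.
  move=> z yz; rewrite /U; apply: le_lt_trans (dXt x y z) _.
  by rewrite -ltrBrDl.
have Ucov : forall y, exists x, U x y.
  move=> y; exists y; rewrite /U.
  have -> : dX y y = 0 by apply/dXeq.
  by rewrite divr_gt0 //; case: (Hr y).
have [s Hs] := cX X U Uo Ucov.
have del0 : forall s : seq X, 0 < foldr (fun x m => Num.min (r x / 2) m) 1 s.
  elim => [|x t IH] //=.
  by rewrite lt_min IH andbT divr_gt0 //; case: (Hr x).
have delle : forall (s : seq X) x, List.In x s ->
    foldr (fun x m => Num.min (r x / 2) m) 1 s <= r x / 2.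
  elim => [|x t IH] //= y [<-|ys].
    by rewrite ge_min lexx.
  by rewrite ge_min IH ?orbT.
exists (foldr (fun x m => Num.min (r x / 2) m) 1 s) => // a b ab.
have [x xs Ua] := Hs a.
have xb : dX x b < r x.
  apply: le_lt_trans (dXt x a b) _.
  rewrite (splitr (r x)); apply: ltrD => //.
  exact: lt_le_trans ab (delle s x xs).
have ra : r x / 2 < r x.
  have rx0 : 0 < r x by case: (Hr x).
  by rewrite ltr_pdivrMr // ltr_pMr // ltr1n.
have h1 := (proj2 (Hr x)) a (lt_trans Ua ra).
have h2 := (proj2 (Hr x)) b xb.
apply: le_lt_trans (dYt (f a) (f x) (f b)) _.
by rewrite (splitr e) dYs; apply: ltrD.
Qed.

Section Conj.
Variables (R : realType) (X Y : Type) (dX : X -> X -> R) (dY : Y -> Y -> R)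
  (phi : X -> Y) (psi : Y -> X).
Hypotheses (phiK : cancel phi psi) (psiK : cancel psi phi).

Lemma conj_word (w : seq (phom X)) y :
  (dom (pcomp_word (map (pconj phi psi) w)) y <-> dom (pcomp_word w) (psi y)) /\
  fn (pcomp_word (map (pconj phi psi) w)) y = phi (fn (pcomp_word w) (psi y)).
Proof.
elim: w => [|g w [IHd IHf]] /=; first by rewrite psiK.
split.
  split.
    move=> [a b]; split; first exact/IHd.
    by move: b; rewrite /= IHf /= phiK.
  move=> [a b]; split; first exact/IHd.
  by rewrite /= IHf /= phiK.
by rewrite /= IHf /= phiK.
Qed.

Lemma lift_word (G1 : seq (phom X)) (w : seq (phom Y)) :
  (forall h, List.In h w -> List.In h (map (pconj phi psi) G1)) ->
  exists w', [/\ size w' = size w, (forall h, List.In h w' -> List.In h G1) &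
    w = map (pconj phi psi) w'].
Proof.
elim: w => [|h w IH] Hw; first by exists [::].
have [|w' [s1 s2 s3]] := IH; first by move=> k kw; apply: Hw; right.
have /List.in_map_iff [g [gh gG]] := Hw h (or_introl erefl).
exists (g :: w'); split => /=; [by rewrite s1| |by rewrite gh s3].
by move=> k [<-|]; [|apply: s2].
Qed.

Lemma sepY_to_X G1 n (e del : R) :
  (forall a b, dX a b < del -> dY (phi a) (phi b) < e) ->
  (sep_card dY (map (pconj phi psi) G1) n e <= sep_card dX G1 n del)%E.
Proof.
move=> H; apply: ereal_sup_le => _ [k [p [pi ps]] <-]; exists k => //.
exists (psi \o p); split.
  by move=> i j /= eq; apply: pi; rewrite -(psiK (p i)) eq psiK.
move=> i j ij; have [w [sz hin d1 d2 le]] := ps i j ij.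
have [w' [s1 s2 s3]] := lift_word hin; subst w.
exists w'; split => //; first by rewrite -sz size_map.
- exact: (proj1 (proj1 (conj_word w' (p i))) d1).
- exact: (proj1 (proj1 (conj_word w' (p j))) d2).
move: le; rewrite !(proj2 (conj_word w' _)) /= => le.
rewrite leNgt; apply/negP => /H; rewrite ltNge le.
by [].
Qed.

Lemma sepX_to_Y G1 n (e del : R) :
  (forall a b, dY a b < del -> dX (psi a) (psi b) < e) ->
  (sep_card dX G1 n e <= sep_card dY (map (pconj phi psi) G1) n del)%E.
Proof.
move=> H; apply: ereal_sup_le => _ [k [p [pi ps]] <-]; exists k => //.
exists (phi \o p); split.
  by move=> i j /= eq; apply: pi; rewrite -(phiK (p i)) eq phiK.
move=> i j ij; have [w [sz hin d1 d2 le]] := ps i j ij.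
exists (map (pconj phi psi) w); split => //; first by rewrite size_map.
- move=> h /List.in_map_iff [g [<- gw]]; apply: List.in_map; exact: hin.
- by apply: (proj2 (proj1 (conj_word w _))); rewrite /= phiK.
- by apply: (proj2 (proj1 (conj_word w _))); rewrite /= phiK.
rewrite !(proj2 (conj_word w _)) /= !phiK.
rewrite leNgt; apply/negP => /H; rewrite !phiK ltNge le.
by [].
Qed.
End Conj.

Theorem mainTheorem15 (R : realType) (X Y : Type)
  (dX : X -> X -> R) (dY : Y -> Y -> R)
  (G : set (phom X)) (H : set (phom Y)) (phi : X -> Y) (psi : Y -> X)
  (G1 : seq (phom X)) :
  compact_metric_space dX -> compact_metric_space dY ->
  is_pseudogroup dX G -> is_pseudogroup dY H ->
  finitely_generated dX G -> finitely_generated dY H ->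
  is_homeomorphism dX dY phi psi ->
  strongly_isomorphic dX dY phi psi G H ->
  generates dX G1 G ->
  htop dX G1 = htop dY (map (pconj phi psi) G1).
Proof.
move=> cX cY _ _ _ _ [phiK psiK phic psic] _ _.
apply/eqP; rewrite eq_le; apply/andP; split; apply: htop_le => e e0.
- have [del del0 Hd] := unif_cont cY (proj1 cX) psic e0.
  by exists del => // n; apply: sepX_to_Y.
- have [del del0 Hd] := unif_cont cX (proj1 cY) phic e0.
  by exists del => // n; apply: sepY_to_X.
Qed.
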